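(* Let $k\in\{0,1,\dots,n\}$ and $Z=\{\bm z\in\{0,1\}^n:\ \|\bm z\|_1=k\}$, and let $\mathbf 1\in\mathbb R^n$ be the all-ones vector. Then $$P(\mathbf 1)=\{(\bm x,\bm z)\in\mathbb R^n\times[0,1]^n:\ \|\bm x\|_1\le\sqrt k,\ \|\bm z\|_1=k\}.$$
   Context: For $\bm\alpha\in\mathbb R^n$, $P_0(\bm\alpha)=\{(\bm x,\bm z)\in\mathbb R^n\times Z:\ \sum_{i=1}^n|\alpha_ix_i|\le\sqrt{\sum_{i=1}^n\alpha_i^2z_i}\}$ and $P(\bm\alpha)=\operatorname{conv}(P_0(\bm\alpha))$, the convex hull. *)

(* Defs.v *)
From HB Require Import structures.
From mathcomp Require Import all_boot all_order all_algebra.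
From mathcomp Require Import boolp classical_sets reals.
Set Implicit Arguments. Unset Strict Implicit. Unset Printing Implicit Defensive.
Import Order.TTheory GRing.Theory Num.Theory.
Local Open Scope ring_scope.
Local Open Scope classical_set_scope.

Definition Zk (R : realType) (n k : nat) : set 'rV[R]_n :=
  [set z : 'rV[R]_n | (forall i, z 0 i = 0 \/ z 0 i = 1) /\ \sum_(i < n) `|z 0 i| = k%:R].

Definition P0 (R : realType) (n : nat) (Z : set 'rV[R]_n) (alpha : 'rV[R]_n)
  : set ('rV[R]_n * 'rV[R]_n) :=
  [set xz : 'rV[R]_n * 'rV[R]_n | Z xz.2 /\
     \sum_(i < n) `|alpha 0 i * xz.1 0 i|
       <= Num.sqrt (\sum_(i < n) alpha 0 i ^+ 2 * xz.2 0 i)].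

Definition conv (R : realType) (n : nat) (S : set ('rV[R]_n * 'rV[R]_n))
  : set ('rV[R]_n * 'rV[R]_n) :=
  [set y : 'rV[R]_n * 'rV[R]_n | exists (m : nat) (w : 'I_m -> R) (p : 'I_m -> 'rV[R]_n * 'rV[R]_n),
     [/\ (forall j, 0 <= w j), \sum_(j < m) w j = 1, (forall j, S (p j)),
         y.1 = \sum_(j < m) w j *: (p j).1 &
         y.2 = \sum_(j < m) w j *: (p j).2]].

Definition P (R : realType) (n : nat) (Z : set 'rV[R]_n) (alpha : 'rV[R]_n) :=
  conv (P0 Z alpha).

(* Main.v *)
Require Import Defs.
From HB Require Import structures.
From mathcomp Require Import all_boot all_order all_algebra.
From mathcomp Require Import boolp classical_sets reals.
From mathcomp Require Import ring lra.
Set Implicit Arguments. Unset Strict Implicit.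
Import Order.TTheory GRing.Theory Num.Theory.
Local Open Scope ring_scope.
Local Open Scope classical_set_scope.

Definition Cz (R : realType) (n k : nat) (z : 'rV[R]_n) :=
  exists m (w : 'I_m -> R) (p : 'I_m -> 'rV[R]_n),
    [/\ forall j, 0 <= w j, \sum_(j < m) w j = 1, forall j, @Zk R n k (p j) &
        z = \sum_(j < m) w j *: p j].

Lemma Cz_single (R : realType) (n k : nat) (z : 'rV[R]_n) : @Zk R n k z -> Cz k z.
Proof.
move=> hz; exists 1%N, (fun _ => 1), (fun _ => z); split => //.
  by rewrite big_ord1.
by rewrite big_ord1 scale1r.
Qed.

Lemma Cz_conv2 (R : realType) (n k : nat) (z1 z2 : 'rV[R]_n) (mu : R) :
  Cz k z1 -> Cz k z2 -> 0 <= mu <= 1 -> Cz k (mu *: z1 + (1 - mu) *: z2).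
Proof.
move=> [m1 [w1 [p1 [w1p w1s p1Z ->]]]] [m2 [w2 [p2 [w2p w2s p2Z ->]]]] /andP[m0 m1'].
have EL : forall i, split (lshift m2 i) = inl i := fun i => unsplitK (inl i).
have ER : forall i, split (rshift m1 i) = inr i := fun i => unsplitK (inr i).
exists (m1 + m2)%N,
  (fun j => match split j with inl a => mu * w1 a | inr b => (1 - mu) * w2 b end),
  (fun j => match split j with inl a => p1 a | inr b => p2 b end).
split.
- move=> j; case: (split j) => a; apply: mulr_ge0 => //; lra.
- rewrite big_split_ord /=.
  under eq_bigr do rewrite EL.
  under [X in _ + X = _]eq_bigr do rewrite ER.
  by rewrite -!mulr_sumr w1s w2s !mulr1 addrC subrK.
- by move=> j; case: (split j).
- rewrite big_split_ord /=.
  under [X in _ = X + _]eq_bigr do rewrite EL.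
  under [X in _ = _ + X]eq_bigr do rewrite ER.
  by rewrite !scaler_sumr; congr (_ + _); apply: eq_bigr => i _; rewrite scalerA.
Qed.

Definition frac (R : realType) (a : R) : bool := (0 < a) && (a < 1).
Definition nfrac (R : realType) n (z : 'rV[R]_n) := #|[pred l | frac (z 0 l)]|.
Definition HS (R : realType) n (k : nat) (z : 'rV[R]_n) :=
  (forall i, 0 <= z 0 i <= 1) /\ \sum_(i < n) z 0 i = k%:R.

Definition eps (R : realType) n (z : 'rV[R]_n) i j := Num.min (1 - z 0 i) (z 0 j).
Definition step (R : realType) n (z : 'rV[R]_n) i j : 'rV[R]_n :=
  \row_l (z 0 l + eps z i j * ((l == i)%:R - (l == j)%:R)).

Lemma sum_delta (R : realType) n (i : 'I_n) : \sum_(l < n) ((l == i)%:R : R) = 1.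
Proof.
by rewrite (bigD1 i) //= eqxx big1 ?addr0 // => l /negbTE ->.
Qed.

Lemma eps_bounds (R : realType) n (z : 'rV[R]_n) i j :
  frac (z 0 i) -> frac (z 0 j) ->
  [/\ 0 < eps z i j, eps z i j <= 1 - z 0 i & eps z i j <= z 0 j].
Proof.
rewrite /frac /eps => /andP[? ?] /andP[? ?]; split.
- rewrite lt_min; apply/andP; split; lra.
- by rewrite ge_min lexx.
- by rewrite ge_min lexx orbT.
Qed.

Lemma step_HS (R : realType) n k (z : 'rV[R]_n) i j :
  HS k z -> i != j -> frac (z 0 i) -> frac (z 0 j) -> HS k (step z i j).
Proof.
move=> [h01 hs] ij fi fj; have [e0 e1 e2] := eps_bounds fi fj.
split.
- move=> l; rewrite mxE.
  case: (eqVneq l i) => [->|li].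
    rewrite (negbTE ij) /=; have := h01 i; move=> /andP[? ?]; apply/andP; split; lra.
  case: (eqVneq l j) => [->|lj].
    rewrite ?(negbTE li) /=; have := h01 j; move=> /andP[? ?]; apply/andP; split; lra.
  by rewrite subrr mulr0 addr0.
- under eq_bigr do rewrite mxE.
  by rewrite big_split /= -mulr_sumr sumrB !sum_delta subrr mulr0 addr0.
Qed.

Lemma step_nfrac (R : realType) n (z : 'rV[R]_n) i j :
  i != j -> frac (z 0 i) -> frac (z 0 j) -> (nfrac (step z i j) < nfrac z)%N.
Proof.
move=> ij fi fj; have [e0 e1 e2] := eps_bounds fi fj.
rewrite /nfrac; apply: proper_card; apply/properP; split.
  apply/fintype.subsetP => l; rewrite !inE mxE.
  case: (eqVneq l i) => [->|li] //.
  case: (eqVneq l j) => [->|lj] //.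
  by rewrite subrr mulr0 addr0.
have : (1 - z 0 i <= z 0 j) || (z 0 j <= 1 - z 0 i) by apply: le_total.
case/orP => h.
  exists i; rewrite !inE // mxE eqxx (negbTE ij) /eps min_l // /frac.
  by rewrite subr0 mulr1 addrC subrK ltxx andbF.
exists j; rewrite !inE // mxE eqxx eq_sym (negbTE ij) /eps min_r // /frac.
by rewrite sub0r mulrN1 subrr ltxx.
Qed.

Lemma step_decomp (R : realType) n (z : 'rV[R]_n) i j :
  i != j -> frac (z 0 i) -> frac (z 0 j) ->
  let e1 := eps z i j in let e2 := eps z j i in
  z = (e2 / (e1 + e2)) *: step z i j + (1 - e2 / (e1 + e2)) *: step z j i.
Proof.
move=> ij fi fj e1 e2.
have [a0 _ _] := eps_bounds fi fj; have [b0 _ _] := eps_bounds fj fi.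
have hne : e1 + e2 != 0 by rewrite gt_eqF // addr_gt0.
apply/rowP => l; rewrite !mxE.
rewrite -/e1 -/e2.
case: (eqVneq l i) => [->|li].
  rewrite (negbTE ij) /=; field; exact: hne.
case: (eqVneq l j) => [->|lj] /=; rewrite ?(negbTE li) /=.
  field; exact: hne.
by rewrite !subrr !mulr0 !addr0; field; exact: hne.
Qed.

Lemma zero_one (R : realType) (a : R) : 0 <= a <= 1 -> ~~ frac a -> a = 0 \/ a = 1.
Proof.
move=> /andP[a0 a1]; rewrite /frac negb_and -!leNgt.
case: (eqVneq a 0) => [->|nz]; first by left.
have ap : 0 < a by rewrite lt_def nz.
rewrite leNgt ap /= => h; right; lra.
Qed.

Lemma Zk_sum (R : realType) n k (z : 'rV[R]_n) : @Zk R n k z -> \sum_(i < n) z 0 i = k%:R.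
Proof.
move=> [h01 <-]; apply: eq_bigr => i _; rewrite ger0_norm //.
by case: (h01 i) => ->.
Qed.

Lemma base (R : realType) n k (z : 'rV[R]_n) : nfrac z = 0%N -> HS k z -> Cz k z.
Proof.
move=> h0 [h01 hs]; apply: Cz_single; split.
  move=> i; apply: zero_one => //; have := card0_eq h0 i; rewrite !inE => ->; done.
by rewrite -hs; apply: eq_bigr => i _; rewrite ger0_norm //; have /andP[] := h01 i.
Qed.

Lemma two_frac (R : realType) n k (z : 'rV[R]_n) i :
  HS k z -> frac (z 0 i) -> exists j, j != i /\ frac (z 0 j).
Proof.
move=> [h01 hs] fi.
case: (boolP [exists j, (j != i) && frac (z 0 j)]) => [/existsP [j /andP[? ?]]|/existsPn H].
  by exists j.
exfalso.
have E : forall j, j != i -> z 0 j = ((z 0 j == 1 : nat))%:R.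
  move=> j ji; have := H j; rewrite ji /= => nf.
  by case: (zero_one (h01 j) nf) => ->; rewrite ?eqxx // eq_sym oner_eq0.
move: hs; rewrite (bigD1 i) //=.
rewrite (eq_bigr (fun j => ((z 0 j == 1 : nat))%:R)); last by move=> j /E.
rewrite -natr_sum; set c := (\sum_(j | _) _)%N => hs.
move: fi; rewrite /frac => /andP[f0 f1].
case: (ltnP c k) => h.
  have : (c.+1)%:R <= k%:R :> R by rewrite ler_nat.
  rewrite -natr1; lra.
have : k%:R <= c%:R :> R by rewrite ler_nat.
lra.
Qed.

Lemma mainHS (R : realType) n k N : forall (z : 'rV[R]_n),
  (nfrac z <= N)%N -> HS k z -> Cz k z.
Proof.
elim: N => [|N IH] z hN hz.
  by apply: base => //; apply/eqP; rewrite -leqn0.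
case: (eqVneq (nfrac z) 0%N) => [h0|nz]; first exact: base.
have : (0 < nfrac z)%N by rewrite lt0n.
case/card_gt0P => i; rewrite inE => fi.
have [j [ji fj]] := two_frac hz fi.
have ij : i != j by rewrite eq_sym.
rewrite (step_decomp ij fi fj).
have [a0 _ _] := eps_bounds fi fj; have [b0 _ _] := eps_bounds fj fi.
apply: Cz_conv2.
- apply: IH; last exact: step_HS.
  by rewrite -ltnS; apply: leq_trans hN; apply: step_nfrac.
- apply: IH; last by apply: step_HS => //; rewrite eq_sym.
  by rewrite -ltnS; apply: leq_trans hN; apply: step_nfrac.
- apply/andP; split; first by apply: divr_ge0; lra.
  rewrite ler_pdivrMr; last lra.
  lra.
Qed.

Theorem mainTheorem7 (R : realType) (n k : nat) (hk : (k <= n)%N) :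
  P (@Zk R n k) (const_mx 1) =
  [set xz : 'rV[R]_n * 'rV[R]_n | (forall i, 0 <= xz.2 0 i <= 1) /\
            \sum_(i < n) `|xz.1 0 i| <= Num.sqrt (k%:R : R) /\
            \sum_(i < n) `|xz.2 0 i| = k%:R].
Proof.
have P0E : forall xz : 'rV[R]_n * 'rV[R]_n, P0 (@Zk R n k) (const_mx 1) xz ->
   @Zk R n k xz.2 /\ \sum_(i < n) `|xz.1 0 i| <= Num.sqrt (k%:R : R).
  move=> xz [hz hx]; split => //.
  move: hx; rewrite -(Zk_sum hz).
  under eq_bigr do rewrite mxE mul1r.
  by under [X in _ <= Num.sqrt X]eq_bigr do rewrite mxE expr1n mul1r.
apply/seteqP; split => -[x z] /=.
- move=> [m [w [p [w0 ws pP ex ez]]]]; simpl in ex, ez.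
  have pz : forall j i, 0 <= (p j).2 0 i <= 1.
    move=> j i; have [[h01 _] _] := P0E _ (pP j).
    by case: (h01 i) => ->; rewrite ?lexx ?ler01.
  have zE : forall i, z 0 i = \sum_(j < m) w j * (p j).2 0 i.
    by move=> i; rewrite ez summxE; apply: eq_bigr => j _; rewrite mxE.
  have z0 : forall i, 0 <= z 0 i.
    move=> i; rewrite zE; apply: sumr_ge0 => j _; apply: mulr_ge0 => //.
    by have /andP[] := pz j i.
  split; [|split].
  + move=> i; rewrite z0 /= zE -ws; apply: ler_sum => j _.
    by apply: ler_piMr => //; have /andP[] := pz j i.
  + rewrite ex.
    apply: (@le_trans _ _ (\sum_(i < n) \sum_(j < m) w j * `|(p j).1 0 i|)).
      apply: ler_sum => i _; rewrite summxE.
      apply: le_trans (ler_norm_sum _ _ _) _.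
      by apply: ler_sum => j _; rewrite mxE normrM ger0_norm.
    rewrite exchange_big /=.
    apply: (@le_trans _ _ (\sum_(j < m) w j * Num.sqrt (k%:R : R))).
      apply: ler_sum => j _; rewrite -mulr_sumr; apply: ler_wpM2l => //.
      by have [_ ?] := P0E _ (pP j).
    by rewrite -mulr_suml ws mul1r.
  + under eq_bigr do rewrite ger0_norm ?z0 // zE.
    rewrite exchange_big /= (eq_bigr (fun j => w j * k%:R)); first by rewrite -mulr_suml ws mul1r.
    move=> j _; rewrite -mulr_sumr; congr (_ * _).
    by have [? _] := P0E _ (pP j); apply: Zk_sum.
- move=> [h01 [hx hz]].
  have hs : HS k z.
    split => //; rewrite -hz; apply: eq_bigr => i _; rewrite ger0_norm //.
    by have /andP[] := h01 i.
  have [m [w [p [w0 ws pZ ez]]]] := @mainHS R n k _ z (leqnn _) hs.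
  exists m, w, (fun j => (x, p j)); split.
  + exact: w0.
  + exact: ws.
  + move=> j; split; first exact: pZ.
    rewrite /=.
    under eq_bigr do rewrite mxE mul1r.
    under [X in _ <= Num.sqrt X]eq_bigr do rewrite mxE expr1n mul1r.
    rewrite (Zk_sum (pZ j)). exact: hx.
  + by rewrite /= -scaler_suml ws scale1r.
  + exact: ez.
Qed.
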